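(* Let $V$ be the set of the $24$ points of $\mathbb{R}^4$ obtained as all coordinate permutations of $(\pm 1,\pm 1,0,0)$; these are the vertices of the $24$-cell. The octahedral cells of the $24$-cell are the following $24$ six-element subsets of $V$: - for each of the $8$ vectors $c\in\{\pm e_1,\pm e_2,\pm e_3,\pm e_4\}$, the cell $C_c=\{v\in V : v\cdot c = 1\}$; - for each of the $16$ vectors $c\in\{(\pm1,\pm1,\pm1,\pm1)\}$, the cell $C_c=\{v\in V: v\cdot c=2\}$. Then there exists a bijection $f\colon V\to\{1,2,\dots,24\}$ such that $\sum_{v\in C}f(v)$ takes the same value for every one of these $24$ octahedral cells $C$. This common value is $75$.
   Context: Here $e_1,\dots,e_4$ are the standard basis vectors of $\mathbb{R}^4$ and $v\cdot c$ is the standard dot product. Each of the sets $C_c$ listed has exactly six elements, and these are the vertex sets of the $24$ octahedral cells of the $24$-cell. A bijection $f$ with equal cell sums is called a cell-magic (facet-magic) labeling, or magic $24$-cell. *)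

(* Defs.v *)
(* Points of R^4 with integer coordinates are represented as
   quadruples of integers; all points involved have coordinates in {-1,0,1}. *)
From mathcomp Require Import all_boot all_order all_algebra.
Set Implicit Arguments. Unset Strict Implicit. Unset Printing Implicit Defensive.
Import Order.TTheory GRing.Theory Num.Theory.
Local Open Scope ring_scope.

Definition vec4 := (int * int * int * int)%type.

Definition dot4 (v c : vec4) : int :=
  let: (a1, a2, a3, a4) := v in let: (b1, b2, b3, b4) := c in
  a1 * b1 + a2 * b2 + a3 * b3 + a4 * b4.

Definition nz (x : int) : nat := if x == 0 then 0%N else 1%N.

(* V: all coordinate permutations of (+-1,+-1,0,0), i.e. the vectors with
   entries in {-1,0,1} having exactly two nonzero entries. *)
Definition quads (s : seq int) : seq vec4 :=
  flatten [seq flatten [seq flatten [seq [seq (a, b, c, d) | d <- s] | c <- s]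
                       | b <- s] | a <- s].

Definition trits : seq int := [:: -1; 0; 1].
Definition V24 : seq vec4 :=
  filter (fun v : vec4 => let: (a, b, c, d) := v in
                           (nz a + nz b + nz c + nz d == 2)%N)
    (quads trits).

Definition axis_vecs : seq vec4 :=
  [:: (1, 0, 0, 0); (-1, 0, 0, 0); (0, 1, 0, 0); (0, -1, 0, 0);
      (0, 0, 1, 0); (0, 0, -1, 0); (0, 0, 0, 1); (0, 0, 0, -1)].

Definition signs : seq int := [:: -1; 1].
Definition sign_vecs : seq vec4 :=
  quads signs.

Definition cells24 : seq (seq vec4) :=
  [seq [seq v <- V24 | dot4 v c == 1] | c <- axis_vecs] ++
  [seq [seq v <- V24 | dot4 v c == 2] | c <- sign_vecs].

Definition bij_onto_1_24 (f : vec4 -> nat) : Prop :=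
  [/\ {in V24 &, injective f},
      (forall v, v \in V24 -> (1 <= f v <= 24)%N) &
      (forall k, (1 <= k <= 24)%N -> exists2 v, v \in V24 & f v = k)].

Lemma V24_size : size V24 = 24%N. Proof. by vm_compute. Qed.
Lemma cells_ok : size cells24 = 24%N /\ all (fun C => size C == 6%N) cells24.
Proof. by vm_compute. Qed.

(* Main.v *)
Require Import Defs.
From mathcomp Require Import all_boot all_order all_algebra.

Definition labs : seq nat :=
  [:: 23; 9; 4; 16; 3; 20; 1; 21; 15; 10; 17; 11; 14; 8; 13; 12; 6; 22; 5; 24; 7; 19; 18; 2]%N.
Definition fl (v : vec4) : nat := nth 0%N labs (index v V24).

Lemma fl_inj : all (fun u => all (fun v => (fl u == fl v) ==> (u == v)) V24) V24.
Proof. by vm_compute. Qed.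
Lemma fl_rng : all (fun v => (1 <= fl v <= 24)%N) V24.
Proof. by vm_compute. Qed.
Lemma fl_surj : all (fun k => k \in map fl V24) (iota 1 24).
Proof. by vm_compute. Qed.
Lemma fl_cells : all (fun C => (\sum_(v <- C) fl v)%N == 75%N) cells24.
Proof. rewrite unlock. by vm_compute. Qed.

Theorem mainTheorem1 :
  exists f : vec4 -> nat, bij_onto_1_24 f /\
    (forall C, C \in cells24 -> (\sum_(v <- C) f v)%N = 75%N).
Proof.
exists fl; split; last by move=> C HC; apply/eqP; exact: (allP fl_cells C HC).
have H2 := allP fl_rng.
split=> //.
  move=> u v Hu Hv E. have := allP (allP fl_inj u Hu) v Hv.
  by rewrite E eqxx => /eqP.
move=> k Hk. have /mapP[v Hv ->] : k \in map fl V24.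
  apply: (allP fl_surj). rewrite mem_iota; case/andP: Hk => a b; rewrite a /=.
  exact: leq_trans b _.
by exists v.
Qed.
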